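(* (i) Every flat and every semibundle of $\mathfrak M$ is a $\boldsymbol\pi$-clique. (ii) Every semiflat and every proper semibundle of $\mathfrak M$ is a $\boldsymbol\rho$-clique.
   Context: Setup. Let $V$ be a vector space of finite dimension $n\ge 3$ over a division ring; $\mathrm{Sub}_j(V)$ is the set of $j$-dimensional subspaces of $V$. Fix $k$ with $1<k<n-1$, a subspace $W$ of $V$ with $w:=\dim W$, and an integer $m$ with $k-(n-w)\le m\le\min\{k,w\}$. For $H\in\mathrm{Sub}_{k-1}(V)$, $B\in\mathrm{Sub}_{k+1}(V)$, $H\subset B$, the $k$-pencil is $\mathbf p(H,B)=\{U\in\mathrm{Sub}_k(V):H\subset U\subset B\}$; the Grassmann space $\mathbf P_k(V)$ has points $\mathrm{Sub}_k(V)$ and lines the $k$-pencils. The spine space $\mathfrak M$ has point set $S=\{U\in\mathrm{Sub}_k(V):\dim(U\cap W)=m\}$ and line set $\mathcal L=\{\ell\cap S:\ell\text{ a $k$-pencil},\ |\ell\cap S|\ge2\}$; points of $\mathrm{Sub}_k(V)\setminus S$ are improper. Each $L\in\mathcal L$ lies in a unique $k$-pencil $\overline L$; $L$ is projective if $L=\overline L$, affine if $|\overline L\setminus L|=1$. Affine lines are parallel if their closures meet in an improper point. A subspace of $\mathfrak M$ is a set $X\subseteq S$ containing every line that meets it in at least two points; it is strong if its points are pairwise collinear; $\overline X$ denotes the smallest subspace of $\mathbf P_k(V)$ containing $X$. A plane of $\mathbf P_k(V)$ is a set $\{U\in\mathrm{Sub}_k(V):Y\subset U\subset Z\}$ with $(\dim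 Y,\dim Z)=(k-2,k+1)$ or $(k-1,k+2)$; a plane of $\mathfrak M$ is $E=P\cap S$ with $P$ a plane of $\mathbf P_k(V)$, containing two distinct lines; $\overline E=P$, and $E$ is projective, punctured or affine according as $P\setminus E$ is empty, a point, or a line. $L_1\,\boldsymbol\pi\,L_2$ iff some plane contains both lines. For a plane $E$ and $U\in\overline E$, $\mathbf p(U,E)=\{L\in\mathcal L:U\in\overline L\subseteq\overline E\}$ is a pencil of lines if $U\in S$ and a parallel pencil if $U\notin S$; $L_1\,\boldsymbol\rho\,L_2$ iff both belong to a common pencil of lines (proper vertex). A $\delta$-clique is a set of lines pairwise $\delta$-related. A flat is $\mathcal L(E)=\{L\in\mathcal L:L\subseteq E\}$ for a plane $E$; a semiflat on $E$ is the set of all projective lines contained in $E$ together with an inclusion-maximal set of pairwise non-parallel affine lines contained in $E$. For a strong subspace $X$ and $U\in\overline X$, the semibundle is $\mathcal L_U(X)=\{L\in\mathcal L:U\in\overline L,\ L\subseteq X\}$; it is proper if $U\in S$. *)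

(* Defs.v *)
From HB Require Import structures.
From mathcomp Require Import all_boot all_order all_algebra.
Set Implicit Arguments. Unset Strict Implicit. Unset Printing Implicit Defensive.
Import GRing.Theory.
Local Open Scope ring_scope.

Definition division_ring (R : unitRingType) : Prop :=
  forall x : R, x != 0 -> x \is a GRing.unit.

Section Spine.
Context {R : unitRingType} {V : lmodType R}.

(* subsets of V; a subspace is recorded by having a dimension (finite basis) *)
Definition subsp := V -> Prop.
Definition same (U1 U2 : subsp) : Prop := forall v, U1 v <-> U2 v.
Definition incl (X Y : subsp) : Prop := forall v, X v -> Y v.
Definition meet (X Y : subsp) : subsp := fun v => X v /\ Y v.

Definition lin_indep (s : seq V) : Prop :=
  forall c : seq R, size c = size s ->
    \sum_(i < size s) c`_i *: s`_i = 0 -> forall i, (i < size s)%N -> c`_i = 0.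
Definition span (s : seq V) (v : V) : Prop :=
  exists c : seq R, v = \sum_(i < size s) c`_i *: s`_i.
Definition hasdim (U : subsp) (d : nat) : Prop :=
  exists s : seq V, size s = d /\ lin_indep s /\ forall v, U v <-> span s v.
Definition Sub (j : nat) (U : subsp) : Prop := hasdim U j.

Definition ptset := subsp -> Prop.
Definition lineset := ptset -> Prop.
Definition sameL (L1 L2 : ptset) : Prop := forall U, L1 U <-> L2 U.

Context (k m : nat) (W : subsp).

Definition pointS (U : subsp) : Prop := Sub k U /\ hasdim (meet U W) m.

Definition kpencil (H B : subsp) : ptset :=
  fun U => Sub k U /\ incl H U /\ incl U B.
Definition is_kpencil (l : ptset) : Prop :=
  exists H B, Sub k.-1 H /\ Sub k.+1 B /\ incl H B /\
    forall U, l U <-> kpencil H B U.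

Definition is_line (L : ptset) : Prop :=
  exists l, is_kpencil l /\ (forall U, L U <-> (l U /\ pointS U)) /\
    exists U1 U2, L U1 /\ L U2 /\ ~ same U1 U2.
(* l is the (unique) k-pencil \overline L containing L *)
Definition closure_line (L l : ptset) : Prop :=
  is_kpencil l /\ forall U, L U -> l U.

Definition projective (L : ptset) : Prop :=
  is_line L /\ exists l, closure_line L l /\ forall U, l U -> L U.
Definition affine (L : ptset) : Prop :=
  is_line L /\ exists l, closure_line L l /\
    exists U0, l U0 /\ ~ L U0 /\ forall U, l U -> ~ L U -> same U U0.
Definition parallel (L1 L2 : ptset) : Prop :=
  affine L1 /\ affine L2 /\
  exists l1 l2 U, closure_line L1 l1 /\ closure_line L2 l2 /\
    l1 U /\ l2 U /\ ~ pointS U.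

Definition subspP (Y : ptset) : Prop :=
  (forall U, Y U -> Sub k U) /\
  forall l, is_kpencil l ->
    (exists U1 U2, l U1 /\ l U2 /\ Y U1 /\ Y U2 /\ ~ same U1 U2) ->
    forall U, l U -> Y U.
Definition closureP (X : ptset) (U : subsp) : Prop :=
  forall Y, subspP Y -> (forall U', X U' -> Y U') -> Y U.

Definition subspM (X : ptset) : Prop :=
  (forall U, X U -> pointS U) /\
  forall L, is_line L ->
    (exists U1 U2, L U1 /\ L U2 /\ X U1 /\ X U2 /\ ~ same U1 U2) ->
    forall U, L U -> X U.
Definition strong (X : ptset) : Prop :=
  subspM X /\ forall U1 U2, X U1 -> X U2 -> ~ same U1 U2 ->
    exists L, is_line L /\ L U1 /\ L U2.

Definition planeP (P : ptset) : Prop :=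
  exists Y Z, ((Sub (k - 2) Y /\ Sub k.+1 Z) \/ (Sub k.-1 Y /\ Sub k.+2 Z)) /\
    incl Y Z /\ forall U, P U <-> (Sub k U /\ incl Y U /\ incl U Z).
(* L is contained in the plane E = P \cap S *)
Definition inE (P L : ptset) : Prop := forall U, L U -> P U /\ pointS U.
(* E = P \cap S is a plane of the spine space (with \overline E = P) *)
Definition planeM (P : ptset) : Prop :=
  planeP P /\ exists L1 L2, is_line L1 /\ is_line L2 /\ inE P L1 /\ inE P L2 /\
    ~ sameL L1 L2.

Definition pi_rel (L1 L2 : ptset) : Prop :=
  exists P, planeM P /\ inE P L1 /\ inE P L2.

(* L \in p(U, E) with \overline E = P *)
Definition in_pencil (P : ptset) (U : subsp) (L : ptset) : Prop :=
  is_line L /\ exists l, closure_line L l /\ l U /\ forall U', l U' -> P U'.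
Definition rho_rel (L1 L2 : ptset) : Prop :=
  exists P U, planeM P /\ P U /\ pointS U /\ in_pencil P U L1 /\ in_pencil P U L2.

Definition clique (rel : ptset -> ptset -> Prop) (C : lineset) : Prop :=
  forall L1 L2, C L1 -> C L2 -> ~ sameL L1 L2 -> rel L1 L2.

Definition flat (C : lineset) : Prop :=
  exists P, planeM P /\ forall L, C L <-> (is_line L /\ inE P L).

Definition nonparallel_set (A : lineset) : Prop :=
  forall L1 L2, A L1 -> A L2 -> ~ sameL L1 L2 -> ~ parallel L1 L2.
Definition semiflat (C : lineset) : Prop :=
  exists P, planeM P /\ exists A : lineset,
    (forall L, A L -> affine L /\ inE P L) /\ nonparallel_set A /\
    (forall A' : lineset, (forall L, A' L -> affine L /\ inE P L) ->
        nonparallel_set A' -> (forall L, A L -> A' L) ->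
        forall L, A' L -> exists L', A L' /\ sameL L L') /\
    forall L, C L <-> ((projective L /\ inE P L) \/ A L).

Definition semibundle_at (X : ptset) (U : subsp) (C : lineset) : Prop :=
  strong X /\ closureP X U /\
  forall L, C L <-> (is_line L /\ (exists l, closure_line L l /\ l U) /\
                     forall U', L U' -> X U').
Definition semibundle (C : lineset) : Prop :=
  exists X U, semibundle_at X U C.
Definition proper_semibundle (C : lineset) : Prop :=
  exists X U, semibundle_at X U C /\ pointS U.

End Spine.

(* Main.v *)
Require Import Defs.
From mathcomp Require Import all_boot all_order all_algebra zify.
From Stdlib Require Import Classical IndefiniteDescription.
Import GRing.Theory.
Local Open Scope ring_scope.

Section LA.
Context {R : unitRingType} {V : lmodType R}.

Definition spanF (n : nat) (f : nat -> V) (v : V) : Prop :=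
  exists c : nat -> R, v = \sum_(i < n) c i *: f i.
Definition indepF (n : nat) (f : nat -> V) : Prop :=
  forall c : nat -> R, \sum_(i < n) c i *: f i = 0 -> forall i, (i < n)%N -> c i = 0.

Lemma span0 n f : spanF n f 0.
Proof. exists (fun _ => 0); by rewrite big1 // => i _; rewrite scale0r. Qed.

Lemma spanD n f u v : spanF n f u -> spanF n f v -> spanF n f (u + v).
Proof.
move=> [c ->] [d ->]; exists (fun i => c i + d i).
by rewrite -big_split /=; apply: eq_bigr => i _; rewrite scalerDl.
Qed.

Lemma spanZ n f a v : spanF n f v -> spanF n f (a *: v).
Proof.
move=> [c ->]; exists (fun i => a * c i).
by rewrite scaler_sumr; apply: eq_bigr => i _; rewrite scalerA.
Qed.

Lemma spanN n f v : spanF n f v -> spanF n f (- v).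
Proof. by move=> h; rewrite -scaleN1r; apply: spanZ. Qed.

Lemma span_sum n f m (c : nat -> R) g :
  (forall i, (i < m)%N -> spanF n f (g i)) -> spanF n f (\sum_(i < m) c i *: g i).
Proof.
elim: m => [|m IH] H; first by rewrite big_ord0; apply: span0.
rewrite big_ord_recr /=; apply: spanD.
  by apply: IH => i Hi; apply: H; lia.
by apply: spanZ; apply: H.
Qed.

Lemma span_trans m g n f v :
  (forall i, (i < m)%N -> spanF n f (g i)) -> spanF m g v -> spanF n f v.
Proof. by move=> H [c ->]; apply: span_sum. Qed.

Lemma span_basis n f j : (j < n)%N -> spanF n f (f j).
Proof.
move=> Hj; exists (fun i => if i == j then 1 else 0).
rewrite (bigD1 (Ordinal Hj)) //= eqxx scale1r big1 ?addr0 // => i Hi.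
have -> : (nat_of_ord i == j) = false.
  by apply/negbTE; apply: contra Hi => /eqP e; apply/eqP/val_inj.
by rewrite scale0r.
Qed.

Definition extF (f : nat -> V) n x := fun i => if i == n then x else f i.

Lemma sum_ext n f x (c : nat -> R) :
  \sum_(i < n.+1) c i *: extF f n x i = \sum_(i < n) c i *: f i + c n *: x.
Proof.
rewrite big_ord_recr /= /extF eqxx; congr (_ + _); apply: eq_bigr => i _.
by rewrite /= (ltn_eqF (ltn_ord i)).
Qed.

Lemma choice_nat (A : Type) (a0 : A) (m : nat) (P : nat -> A -> Prop) :
  (forall i, (i < m)%N -> exists a, P i a) ->
  exists F : nat -> A, forall i, (i < m)%N -> P i (F i).
Proof.
move=> H.
have H' : forall i, exists a, (i < m)%N -> P i a.
  move=> i; case: (ltnP i m) => Hi.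
    by have [a Ha] := H i Hi; exists a.
  by exists a0 => Hlt; exfalso; lia.
exists (fun i => proj1_sig (constructive_indefinite_description _ (H' i))).
move=> i Hi; exact: (proj2_sig (constructive_indefinite_description _ (H' i)) Hi).
Qed.

Hypothesis HR : division_ring R.

Lemma ext_indep n f x : indepF n f -> ~ spanF n f x -> indepF n.+1 (extF f n x).
Proof.
move=> Hi Hx c; rewrite sum_ext => H0.
have cn0 : c n = 0.
  case: (eqVneq (c n) 0) => // cn0; exfalso; apply: Hx.
  have Hu := HR _ cn0.
  move/eqP: H0; rewrite addrC addr_eq0 => /eqP e.
  have -> : x = (c n)^-1 *: (c n *: x) by rewrite scalerA mulVr // scale1r.
  by rewrite e; apply/spanZ/spanN; exists c.
move: H0; rewrite cn0 scale0r addr0 => H0 i Hin.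
case: (eqVneq i n) => [->//|ne]; apply: Hi => //; lia.
Qed.

Section Elim.
Variables (m : nat) (g : nat -> V) (a : nat -> R) (j : nat).
Hypothesis Hj : (j < m.+1)%N.
Definition alph i := a (bump j i) * (a j)^-1.
Definition gE i := g (bump j i) - alph i *: g j.

Lemma bump_lt i : (i < m)%N -> (bump j i < m.+1)%N.
Proof. rewrite /bump; lia. Qed.

Lemma E1 w x : a j \is a GRing.unit ->
  (forall i, (i < m.+1)%N -> g i = a i *: x + w i) ->
  forall i, (i < m)%N -> gE i = w (bump j i) - alph i *: w j.
Proof.
move=> Hu Hg i Hi; rewrite /gE !Hg //; last exact: bump_lt.
by rewrite scalerDr scalerA /alph divrK // opprD addrACA subrr add0r.
Qed.

Lemma sum_split (F : nat -> V) :
  \sum_(l < m.+1) F l = F j + \sum_(i < m) F (bump j i).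
Proof.
by rewrite (bigD1_ord (Ordinal Hj)) //=.
Qed.

Lemma sum_splitR (F : nat -> R) :
  \sum_(l < m.+1) F l = F j + \sum_(i < m) F (bump j i).
Proof.
by rewrite (bigD1_ord (Ordinal Hj)) //=.
Qed.

Lemma E2 : indepF m.+1 g -> indepF m gE.
Proof.
move=> Hind d Hd i Hi.
pose c l := if l == j then - \sum_(i < m) d i * alph i else d (unbump j l).
have H0 : \sum_(l < m.+1) c l *: g l = 0.
  rewrite (sum_split (fun l => c l *: g l)) /c eqxx.
  have -> : \sum_(i < m) (if bump j i == j then - \sum_(i0 < m) d i0 * alph i0
                          else d (unbump j (bump j i))) *: g (bump j i)
          = \sum_(i < m) d i *: g (bump j i).
    by apply: eq_bigr => l _; rewrite eq_sym (negbTE (neq_bump j l)) bumpK.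
  rewrite -[X in _ = X]Hd /gE.
  have -> : \sum_(i0 < m) d i0 *: (g (bump j i0) - alph i0 *: g j)
     = \sum_(i0 < m) d i0 *: g (bump j i0) - \sum_(i0 < m) (d i0 * alph i0) *: g j.
    by rewrite -sumrB; apply: eq_bigr => l _; rewrite scalerBr scalerA.
  by rewrite -scaler_suml scaleNr addrC.
have := Hind c H0 (bump j i) (bump_lt _ Hi).
by rewrite /c eq_sym (negbTE (neq_bump j i)) bumpK.
Qed.

Lemma E3 (c : nat -> R) v : a j \is a GRing.unit ->
  v = \sum_(i < m.+1) c i *: g i -> \sum_(i < m.+1) c i * a i = 0 -> spanF m gE v.
Proof.
move=> Hu -> Hs; exists (fun i => c (bump j i)).
rewrite (sum_split (fun l => c l *: g l)) /gE.
have -> : \sum_(i0 < m) c (bump j i0) *: (g (bump j i0) - alph i0 *: g j)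
     = \sum_(i0 < m) c (bump j i0) *: g (bump j i0)
       - \sum_(i0 < m) (c (bump j i0) * alph i0) *: g j.
  by rewrite -sumrB; apply: eq_bigr => l _; rewrite scalerBr scalerA.
rewrite -scaler_suml addrC; congr (_ + _).
rewrite (sum_splitR (fun l => c l * a l)) in Hs.
move/eqP: Hs; rewrite addr_eq0 => /eqP Hs.
have -> : c j = c j * a j * (a j)^-1 by rewrite mulrK.
rewrite Hs -scaleNr; congr (_ *: _).
rewrite mulNr mulr_suml; congr (- _); apply: eq_bigr => l _.
by rewrite /alph mulrA.
Qed.
End Elim.

Lemma steinitz n : forall f m g, indepF m g ->
  (forall i, (i < m)%N -> spanF n f (g i)) -> (m <= n)%N.
Proof.
elim: n => [|n IH] f m g Hind Hsp.
  case: m Hind Hsp => // m Hind Hsp.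
  have := Hind (fun _ => 1) _ 0 (ltn0Sn m).
  have H0 : \sum_(i < m.+1) (fun _ : nat => (1 : R)) i *: g i = 0.
    apply: big1 => i _; have [c ->] := Hsp i (ltn_ord i).
    by rewrite big_ord0 scaler0.
  by move=> /(_ H0) /eqP; rewrite oner_eq0.
have [C HC] := @choice_nat (nat -> R) (fun _ => 0) m (fun i (c : nat -> R) => g i = \sum_(l < n.+1) c l *: f l) Hsp.
pose a i := C i n.
pose w i := \sum_(l < n) C i l *: f l.
have Hg : forall i, (i < m)%N -> g i = a i *: f n + w i.
  by move=> i Hi; rewrite HC // big_ord_recr addrC.
have Hw : forall i, spanF n f (w i) by move=> i; exists (C i).
case: (classic (exists j, (j < m)%N /\ a j != 0)) => [[j [Hj Haj]]|Hno].
  case: m Hind Hsp HC Hg Hj => [//|m] Hind Hsp HC Hg Hj.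
  have := IH f m (gE g a j) (E2 _ _ _ _ Hj Hind).
  apply => i Hi.
  rewrite (E1 _ _ _ _ Hj _ _ (HR _ Haj) Hg _ Hi).
  by apply: spanD; [apply: Hw | apply/spanN/spanZ/Hw].
apply: leq_trans (IH f m g Hind _) (leqnSn n) => i Hi.
have -> : g i = w i.
  rewrite Hg //; case: (eqVneq (a i) 0) => [->|ne]; first by rewrite scale0r add0r.
  by exfalso; apply: Hno; exists i.
exact: Hw.
Qed.

Lemma fill n f g v : indepF n g -> (forall i, (i < n)%N -> spanF n f (g i)) ->
  spanF n f v -> spanF n g v.
Proof.
move=> Ig Hg Hv; apply: NNPP => Hn.
have H : forall i, (i < n.+1)%N -> spanF n f (extF g n v i).
  move=> i Hi; rewrite /extF; case: eqP => // ne; apply: Hg; lia.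
have := steinitz n f n.+1 (extF g n v) (ext_indep n g v Ig Hn) H.
by rewrite ltnn.
Qed.

Lemma hasdimE (U : @subsp R V) d : hasdim U d <->
  exists f, indepF d f /\ forall v, U v <-> spanF d f v.
Proof.
split.
  move=> [s [Hs [Hli Hsp]]]; exists (fun i => s`_i); split.
    move=> c Hc i Hi.
    have := Hli (mkseq c d); rewrite size_mkseq Hs => /(_ erefl).
    have -> : \sum_(i < d) (mkseq c d)`_i *: s`_i = \sum_(i < d) c i *: s`_i.
      by apply: eq_bigr => l _; rewrite nth_mkseq.
    by move=> /(_ Hc i Hi); rewrite nth_mkseq.
  move=> v; rewrite Hsp; split => [[c ->]|[c ->]].
    by exists (fun i => c`_i); rewrite Hs.
  exists (mkseq c d); rewrite Hs; apply: eq_bigr => i _; rewrite nth_mkseq //.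
move=> [f [Hf Hsp]]; exists (mkseq f d); split; first by rewrite size_mkseq.
split.
  move=> c; rewrite size_mkseq => Hc Hsum i Hi.
  apply: (Hf (fun i => c`_i)) => //; rewrite -[X in _ = X]Hsum; apply: eq_bigr => l _.
  by rewrite nth_mkseq.
move=> v; rewrite Hsp; split => [[c ->]|[c ->]].
  exists (mkseq c d); rewrite size_mkseq; apply: eq_bigr => i _; rewrite !nth_mkseq //.
by exists (fun i => c`_i); rewrite size_mkseq; apply: eq_bigr => i _; rewrite nth_mkseq.
Qed.

Lemma hd_span {U : @subsp R V} {d m g v} : hasdim U d ->
  (forall i, (i < m)%N -> U (g i)) -> spanF m g v -> U v.
Proof.
move=> /hasdimE [f [_ Hsp]] Hg Hv; apply/Hsp.
by apply: (span_trans m g d f v) Hv => i Hi; apply/Hsp; exact: Hg.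
Qed.

Lemma hd0 {U : @subsp R V} {d} : hasdim U d -> U 0.
Proof. move=> /hasdimE [f [_ Hsp]]; apply/Hsp; exact: span0. Qed.
Lemma hdD {U : @subsp R V} {d u v} : hasdim U d -> U u -> U v -> U (u + v).
Proof. move=> /hasdimE [f [_ Hsp]] /Hsp Hu /Hsp Hv; apply/Hsp; exact: spanD. Qed.
Lemma hdZ {U : @subsp R V} {d} a {u} : hasdim U d -> U u -> U (a *: u).
Proof. move=> /hasdimE [f [_ Hsp]] /Hsp Hu; apply/Hsp; exact: spanZ. Qed.
Lemma hdN {U : @subsp R V} {d u} : hasdim U d -> U u -> U (- u).
Proof. move=> /hasdimE [f [_ Hsp]] /Hsp Hu; apply/Hsp; exact: spanN. Qed.
Lemma hd_sum {U : @subsp R V} {d m} (c : nat -> R) {g} : hasdim U d ->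
  (forall i, (i < m)%N -> U (g i)) -> U (\sum_(i < m) c i *: g i).
Proof. move=> HU Hg; apply: (hd_span HU Hg); by exists c. Qed.

Lemma hd_eq {A B : @subsp R V} {d} : hasdim A d -> hasdim B d -> incl A B -> incl B A.
Proof.
move=> /hasdimE [fa [Ia Sa]] /hasdimE [fb [Ib Sb]] AB v /Sb Bv.
apply/Sa; apply: (fill d fb fa v Ia _ Bv) => i Hi; apply/Sb/AB/Sa.
exact: span_basis.
Qed.

Definition addv (A : @subsp R V) (x : V) : subsp :=
  fun v => exists a w, A w /\ v = a *: x + w.

Lemma hd_ext {A : @subsp R V} {d x} : hasdim A d -> ~ A x -> hasdim (addv A x) d.+1.
Proof.
move=> HA Hx; have /hasdimE [fa [Ia Sa]] := HA.
apply/hasdimE; exists (extF fa d x); split.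
  by apply: (ext_indep d fa x Ia) => /Sa; exact: Hx.
move=> v; split.
  move=> [a [w [/Sa Aw ->]]]; rewrite addrC; apply: spanD.
    apply: (span_trans d fa) Aw => i Hi.
    have -> : fa i = extF fa d x i by rewrite /extF (ltn_eqF Hi).
    apply: span_basis; lia.
  apply: spanZ; have E : extF fa d x d = x by rewrite /extF eqxx.
  rewrite -{2}E; exact: span_basis.
move=> [c ->]; rewrite sum_ext; exists (c d), (\sum_(i < d) c i *: fa i).
by split; [apply/Sa; exists c | rewrite addrC].
Qed.

Lemma addv_l {A : @subsp R V} {x} : incl A (addv A x).
Proof. by move=> v Av; exists 0, v; rewrite scale0r add0r. Qed.
Lemma addv_x {A : @subsp R V} {d} x : hasdim A d -> addv A x x.
Proof. by move=> HA; exists 1, 0; rewrite scale1r addr0; split => //; apply: (hd0 HA). Qed.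
Lemma addv_min {A Z : @subsp R V} {x e} : hasdim Z e -> incl A Z -> Z x -> incl (addv A x) Z.
Proof. by move=> HZ AZ Zx v [a [w [Aw ->]]]; apply: (hdD HZ); [apply: (hdZ _ HZ) | apply: AZ]. Qed.

Lemma ex_diff {A B : @subsp R V} : ~ incl B A -> exists v, B v /\ ~ A v.
Proof.
move=> H; apply: NNPP => H1; apply: H => v Bv; apply: NNPP => Av; apply: H1.
by exists v.
Qed.

Lemma hd_meet {A : @subsp R V} {d} {B : @subsp R V} {m x} : hasdim A d -> ~ A x ->
  hasdim B m.+1 -> incl B (addv A x) -> ~ incl B A ->
  exists K : @subsp R V, hasdim K m /\ incl K A /\ incl K B /\
    (forall v, A v -> B v -> K v).
Proof.
move=> HA Hx HB BAx nBA.
have /hasdimE [g [Ig Sg]] := HB.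
have Hgi : forall i, (i < m.+1)%N -> exists p : R * V, A p.2 /\ g i = p.1 *: x + p.2.
  move=> i Hi; have [a [w [Aw e]]] := BAx _ (proj2 (Sg _) (span_basis _ _ _ Hi)).
  by exists (a, w).
have [F HF] := @choice_nat (R * V) (0, 0) m.+1
   (fun i p => A p.2 /\ g i = p.1 *: x + p.2) Hgi.
pose a i := (F i).1. pose w i := (F i).2.
have Hg : forall i, (i < m.+1)%N -> g i = a i *: x + w i by move=> i /HF [].
have Aw : forall i, (i < m.+1)%N -> A (w i) by move=> i /HF [].
case: (classic (exists j, (j < m.+1)%N /\ a j != 0)) => [[j [Hj Haj]]|Hno]; last first.
  exfalso; apply: nBA => v /Sg Hv; apply: (hd_span HA _ Hv) => i Hi.
  rewrite Hg //; case: (eqVneq (a i) 0) => [->|ne].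
    by rewrite scale0r add0r; apply: Aw.
  by exfalso; apply: Hno; exists i.
have Hu := HR _ Haj.
exists (spanF m (gE g a j)); split.
  apply/hasdimE; exists (gE g a j); split => //; exact: (E2 _ _ _ _ Hj Ig).
split.
  move=> v Hv; apply: (hd_span HA _ Hv) => i Hi.
  rewrite (E1 _ _ _ _ Hj _ _ Hu Hg _ Hi).
  apply: (hdD HA); first by apply: Aw; exact: bump_lt.
  by apply: (hdN HA); apply: (hdZ _ HA); apply: Aw.
split.
  move=> v Hv; apply: (hd_span HB _ Hv) => i Hi; rewrite /gE.
  apply: (hdD HB); first by apply/Sg; apply: span_basis; exact: bump_lt.
  by apply: (hdN HB); apply: (hdZ _ HB); apply/Sg; apply: span_basis.
move=> v Av /Sg [c Hv].
have Hsum : \sum_(i < m.+1) c i *: g i =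
   (\sum_(i < m.+1) c i * a i) *: x + \sum_(i < m.+1) c i *: w i.
  rewrite scaler_suml -big_split; apply: eq_bigr => i _ /=.
  by rewrite Hg // scalerDr scalerA.
case: (eqVneq (\sum_(i < m.+1) c i * a i) 0) => [s0|sn0].
  exact: (E3 _ _ _ _ Hj c v Hu Hv s0).
exfalso; apply: Hx.
have HW : A (\sum_(i < m.+1) c i *: w i) by apply: (hd_sum _ HA) => i Hi; apply: Aw.
move: Hsum sn0 HW.
set s := \sum_(i < m.+1) c i * a i.
set W := \sum_(i < m.+1) c i *: w i => Hsum sn0 HW.
have -> : x = s^-1 *: (v - W).
  by rewrite Hv Hsum addrK scalerA mulVr ?scale1r //; apply: HR.
by apply: (hdZ _ HA); apply: (hdD HA Av); apply: (hdN HA).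
Qed.

Lemma hd_same {U U' : @subsp R V} {d} : hasdim U d -> same U U' -> hasdim U' d.
Proof.
move=> [s [Hs [Hli Hsp]]] HUU; exists s; split => //; split => // v.
by split => [Hv|Hv]; [apply/Hsp/HUU | apply/HUU/Hsp].
Qed.

Lemma kp_same {k} {H B U U' : @subsp R V} : kpencil k H B U -> same U U' -> kpencil k H B U'.
Proof.
move=> [SU [HU UB]] e; split; first exact: hd_same SU e.
by split => v Hv; [apply/e; apply: HU | apply: UB; apply/e].
Qed.

Lemma pl1 {k} {H U1 U2 : @subsp R V} : (0 < k)%N -> hasdim H k.-1 -> hasdim U1 k ->
  hasdim U2 k -> incl H U1 -> incl H U2 -> ~ same U1 U2 ->
  forall v, U1 v -> U2 v -> H v.
Proof.
move=> k0 HH H1 H2 HU1 HU2 nS v U1v U2v; apply: NNPP => Hv.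
have HE := hd_ext HH Hv; rewrite prednK // in HE.
have E1 : incl (addv H v) U1 := addv_min H1 HU1 U1v.
have E2 : incl (addv H v) U2 := addv_min H2 HU2 U2v.
apply: nS => u; split => [/(hd_eq HE H1 E1) /E2 // | /(hd_eq HE H2 E2) /E1 //].
Qed.

Lemma pl2 {k e} {B U1 U2 Z : @subsp R V} : hasdim U1 k -> hasdim U2 k ->
  hasdim B k.+1 -> incl U1 B -> incl U2 B -> ~ same U1 U2 -> hasdim Z e ->
  incl U1 Z -> incl U2 Z -> incl B Z.
Proof.
move=> H1 H2 HB U1B U2B nS HZ U1Z U2Z.
have [u [U2u nU1u]] : exists u, U2 u /\ ~ U1 u.
  apply: ex_diff => U21; apply: nS => v; split; [exact: (hd_eq H2 H1 U21) | exact: U21].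
have HE := hd_ext H1 nU1u.
have EB : incl (addv U1 u) B := addv_min HB U1B (U2B _ U2u).
move=> v /(hd_eq HE HB EB); exact: (addv_min HZ U1Z (U2Z _ U2u) v).
Qed.

Lemma pen_sub {k} {H B H' B' U1 U2 : @subsp R V} : (0 < k)%N -> hasdim H k.-1 ->
  hasdim B k.+1 -> hasdim B' k.+1 ->
  kpencil k H B U1 -> kpencil k H B U2 -> kpencil k H' B' U1 -> kpencil k H' B' U2 ->
  ~ same U1 U2 -> forall U, kpencil k H B U -> kpencil k H' B' U.
Proof.
move=> k0 HH HB HB' [S1 [HU1 U1B]] [S2 [HU2 U2B]] [_ [H'U1 U1B']] [_ [H'U2 U2B']] nS
  U [SU [HU UB]].
split => //; split.
  move=> v H'v; apply: HU.
  exact: (pl1 k0 HH S1 S2 HU1 HU2 nS v (H'U1 _ H'v) (H'U2 _ H'v)).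
move=> v /UB; exact: (pl2 S1 S2 HB U1B U2B nS HB' U1B' U2B').
Qed.

Definition lchar k m W (L : @ptset R V) (H B : @subsp R V) :=
  forall U, L U <-> kpencil k H B U /\ pointS k m W U.

Lemma line_data {k m W} {L : @ptset R V} : is_line k m W L -> exists H B : @subsp R V,
  hasdim H k.-1 /\ hasdim B k.+1 /\ lchar k m W L H B /\
  exists U1 U2, L U1 /\ L U2 /\ ~ same U1 U2.
Proof.
move=> [l [[H [B [HH [HB [HHB Hl]]]]] [HL HU]]]; exists H, B; do 3 (split => //).
move=> U; split => [/HL [lU pU]|[kU pU]].
  by split => //; apply/Hl.
by apply/HL; split => //; apply/Hl.
Qed.

Lemma two_pts {k m W} {L : @ptset R V} : is_line k m W L -> exists U1 U2, L U1 /\ L U2 /\ ~ same U1 U2.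
Proof. by move=> [l [_ [_ H]]]. Qed.

Lemma other_pt {k m W} {L : @ptset R V} (U : @subsp R V) : is_line k m W L ->
  exists U1, L U1 /\ ~ same U1 U.
Proof.
move=> /two_pts [Ua [Ub [La [Lb nab]]]].
case: (classic (same Ua U)) => [eA|nA]; last by exists Ua.
exists Ub; split => // eB; apply: nab => v; rewrite (eA v) (eB v); done.
Qed.

Lemma closure_eq {k m W} {L l : @ptset R V} {H B : @subsp R V} : (0 < k)%N ->
  hasdim H k.-1 -> hasdim B k.+1 -> lchar k m W L H B -> is_line k m W L ->
  closure_line k L l -> forall U, (kpencil k H B U -> l U) /\ (l U -> kpencil k H B U).
Proof.
move=> k0 HH HB Hc /two_pts [U1 [U2 [L1 [L2 nS]]]] [[H' [B' [HH' [HB' [_ Hl]]]]] Ll] U.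
have k1 := proj1 (proj1 (Hc _) L1); have k2 := proj1 (proj1 (Hc _) L2).
have k1' := proj1 (Hl _) (Ll _ L1); have k2' := proj1 (Hl _) (Ll _ L2).
split => [kU|lU].
  by apply/Hl; apply: (pen_sub k0 HH HB HB' k1 k2 k1' k2' nS).
by apply: (pen_sub k0 HH' HB' HB k1' k2' k1 k2 nS); apply/Hl.
Qed.

Lemma eqL {k m W} {L1 L2 : @ptset R V} {H1 B1 H2 B2 : @subsp R V} :
  lchar k m W L1 H1 B1 -> lchar k m W L2 H2 B2 ->
  incl H1 H2 -> incl H2 H1 -> incl B1 B2 -> incl B2 B1 -> sameL L1 L2.
Proof.
move=> C1 C2 h12 h21 b12 b21 U; split.
  move=> /C1 [[SU [HU UB]] pU]; apply/C2; split => //; split => //.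
  by split => v Hv; [apply: HU; apply: h21 | apply: b12; apply: UB].
move=> /C2 [[SU [HU UB]] pU]; apply/C1; split => //; split => //.
by split => v Hv; [apply: HU; apply: h12 | apply: b21; apply: UB].
Qed.

Lemma sameL_of2 {k m W} {L1 L2 : @ptset R V} {H1 B1 H2 B2 Ua Ub : @subsp R V} :
  (0 < k)%N -> hasdim H1 k.-1 -> hasdim B1 k.+1 -> hasdim H2 k.-1 -> hasdim B2 k.+1 ->
  lchar k m W L1 H1 B1 -> lchar k m W L2 H2 B2 ->
  kpencil k H1 B1 Ua -> kpencil k H1 B1 Ub -> kpencil k H2 B2 Ua -> kpencil k H2 B2 Ub ->
  ~ same Ua Ub -> sameL L1 L2.
Proof.
move=> k0 HH1 HB1 HH2 HB2 C1 C2 a1 b1 a2 b2 nS U; split.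
  by move=> /C1 [kU pU]; apply/C2; split => //; apply: (pen_sub k0 HH1 HB1 HB2 a1 b1 a2 b2 nS).
by move=> /C2 [kU pU]; apply/C1; split => //; apply: (pen_sub k0 HH2 HB2 HB1 a2 b2 a1 b1 nS).
Qed.

Lemma inclHB {k m W} {L : @ptset R V} {H B : @subsp R V} :
  lchar k m W L H B -> is_line k m W L -> incl H B.
Proof.
move=> C /two_pts [Ua [_ [La _]]]; have [[_ [HU UB]] _] := proj1 (C _) La.
by move=> v /HU /UB.
Qed.

Lemma key_sb {k m W} {X : @ptset R V} {U : @subsp R V} {L1 L2 : @ptset R V}
  {H1 B1 H2 B2 : @subsp R V} :
  (1 < k)%N -> hasdim H1 k.-1 -> hasdim B1 k.+1 -> hasdim H2 k.-1 -> hasdim B2 k.+1 ->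
  lchar k m W L1 H1 B1 -> lchar k m W L2 H2 B2 ->
  is_line k m W L1 -> is_line k m W L2 ->
  kpencil k H1 B1 U -> kpencil k H2 B2 U -> ~ sameL L1 L2 -> strong k m W X ->
  (forall U', L1 U' -> X U') -> (forall U', L2 U' -> X U') ->
  exists P, planeP k P /\ P U /\ (forall U', kpencil k H1 B1 U' -> P U') /\
    (forall U', kpencil k H2 B2 U' -> P U').
Proof.
move=> k1 HH1 HB1 HH2 HB2 C1 C2 l1 l2 kU1 kU2 nL [_ Hst] X1 X2.
have k0 : (0 < k)%N by lia.
have [U1 [L1U1 nU1]] := other_pt U l1.
have [U2 [L2U2 nU2]] := other_pt U l2.
have k11 := proj1 (proj1 (C1 _) L1U1). have k22 := proj1 (proj1 (C2 _) L2U2).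
have nU1' : ~ same U U1 by move=> e; apply: nU1 => v; rewrite (e v).
have nU2' : ~ same U U2 by move=> e; apply: nU2 => v; rewrite (e v).
have nS12 : ~ same U1 U2.
  move=> e; apply: nL.
  exact: (sameL_of2 k0 HH1 HB1 HH2 HB2 C1 C2 kU1 k11 kU2 (kp_same k22 (fun v => iff_sym (e v))) nU1').
have [SU [H1U UB1]] := kU1. have [_ [H2U UB2]] := kU2.
have [S1 [H1U1 U1B1]] := k11. have [S2 [H2U2 U2B2]] := k22.
case: (classic (incl H1 U2)) => [H1U2|nH1U2].
  have H12 : incl H1 H2 :=
    fun v Hv => pl1 k0 HH2 SU S2 H2U H2U2 nU2' v (H1U _ Hv) (H1U2 _ Hv).
  have H21 := hd_eq HH1 HH2 H12.
  have nB21 : ~ incl B2 B1.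
    by move=> b21; apply: nL; apply: (eqL C1 C2 H12 H21 (hd_eq HB2 HB1 b21) b21).
  have [b [B2b nB1b]] := ex_diff nB21.
  have HE := hd_ext HB1 nB1b.
  have nUb : ~ U b by move=> /UB1.
  have HE' := hd_ext SU nUb.
  have E'B2 : incl (addv U b) B2 := addv_min HB2 UB2 B2b.
  have B2E' := hd_eq HE' HB2 E'B2.
  have E'E : incl (addv U b) (addv B1 b) :=
    addv_min HE (fun v Uv => addv_l _ (UB1 _ Uv)) (addv_x b HB1).
  exists (fun U' : @subsp R V => Defs.Sub k U' /\ incl H1 U' /\ incl U' (addv B1 b)).
  split.
    exists H1, (addv B1 b); split; first by right.
    split; [by move=> v /H1U /UB1 /addv_l | move=> U0; exact: iff_refl].
  split; first by split => //; split => // v /UB1 /addv_l.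
  split => U' [S' [H' B']]; split => //; split.
  - by [].
  - by move=> v /B' /addv_l.
  - by move=> v /H12 /H'.
  - by move=> v /B' /B2E' /E'E.
have [x [H1x nU2x]] := ex_diff nH1U2.
have nH2x : ~ H2 x by move=> /H2U2.
have HE := hd_ext HH2 nH2x; rewrite prednK // in HE.
have EU : incl (addv H2 x) U := addv_min SU H2U (H1U _ H1x).
have UE := hd_eq HE SU EU.
have [L [lL [LU1 LU2]]] := Hst U1 U2 (X1 _ L1U1) (X2 _ L2U2) nS12.
have [H [B [HH [HB [C _]]]]] := line_data lL.
have [[_ [_ U1B]] _] := proj1 (C _) LU1. have [[_ [_ U2B]] _] := proj1 (C _) LU2.
have EB : incl (addv H2 x) B :=
  addv_min HB (fun v Hv => U2B _ (H2U2 _ Hv)) (U1B _ (H1U1 _ H1x)).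
have UB : incl U B := fun v Uv => EB _ (UE _ Uv).
have B1B : incl B1 B := pl2 SU S1 HB1 UB1 U1B1 nU1' HB UB U1B.
have BB1 := hd_eq HB1 HB B1B.
have B2B : incl B2 B := pl2 SU S2 HB2 UB2 U2B2 nU2' HB UB U2B.
have BB2 := hd_eq HB2 HB B2B.
have nH21 : ~ incl H2 H1.
  move=> h21; apply: nL; apply: (eqL C1 C2 (hd_eq HH2 HH1 h21) h21).
    by move=> v /B1B /BB2.
  by move=> v /B2B /BB1.
have [h [H2h nH1h]] := ex_diff nH21.
have HE2 := hd_ext HH1 nH1h; rewrite prednK // in HE2.
have E2U : incl (addv H1 h) U := addv_min SU H1U (H2U _ H2h).
have UE2 := hd_eq HE2 SU E2U.
have HH2' : hasdim H2 (k - 2).+1.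
  by have -> : (k - 2).+1 = k.-1 by lia.
have [K [HK [KH1 [KH2 _]]]] :=
  hd_meet HH1 nH1h HH2' (fun v Hv => UE2 _ (H2U _ Hv)) nH21.
exists (fun U' : @subsp R V => Defs.Sub k U' /\ incl K U' /\ incl U' B1).
split.
  exists K, B1; split; first by left.
  split; [by move=> v /KH1 /H1U /UB1 | move=> U0; exact: iff_refl].
split; first by split => //; split => // v /KH1 /H1U.
split => U' [S' [H' B']]; split => //; split.
- by move=> v /KH1 /H'.
- by [].
- by move=> v /KH2 /H'.
- by move=> v /B' /B2B /BB1.
Qed.

Lemma in_plane_pen {k m W e} {P L : @ptset R V} {H B Y Z : @subsp R V} :
  (0 < k)%N -> hasdim H k.-1 -> hasdim B k.+1 -> hasdim Z e ->
  lchar k m W L H B -> is_line k m W L -> Defs.inE k m W P L ->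
  (forall U, P U <-> Defs.Sub k U /\ incl Y U /\ incl U Z) -> incl Y H /\ incl B Z.
Proof.
move=> k0 HH HB HZ C /two_pts [Ua [Ub [La [Lb nS]]]] HI HP.
have [[Sa [HUa UaB]] _] := proj1 (C _) La. have [[Sb [HUb UbB]] _] := proj1 (C _) Lb.
have [_ [YUa UaZ]] := proj1 (HP _) (proj1 (HI _ La)).
have [_ [YUb UbZ]] := proj1 (HP _) (proj1 (HI _ Lb)).
split.
  by move=> v Yv; exact: (pl1 k0 HH Sa Sb HUa HUb nS v (YUa _ Yv) (YUb _ Yv)).
exact: (pl2 Sa Sb HB UaB UbB nS HZ UaZ UbZ).
Qed.

Lemma key_sf {k m W} {P L1 L2 : @ptset R V} {H1 B1 H2 B2 : @subsp R V} :
  (1 < k)%N -> hasdim H1 k.-1 -> hasdim B1 k.+1 -> hasdim H2 k.-1 -> hasdim B2 k.+1 ->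
  lchar k m W L1 H1 B1 -> lchar k m W L2 H2 B2 -> is_line k m W L1 -> is_line k m W L2 ->
  planeP k P -> Defs.inE k m W P L1 -> Defs.inE k m W P L2 -> ~ sameL L1 L2 ->
  exists U, P U /\ kpencil k H1 B1 U /\ kpencil k H2 B2 U /\
    (forall U', kpencil k H1 B1 U' -> P U') /\ (forall U', kpencil k H2 B2 U' -> P U').
Proof.
move=> k1 HH1 HB1 HH2 HB2 C1 C2 l1 l2 [Y [Z [Hd [YZ HP]]]] I1 I2 nL.
have k0 : (0 < k)%N by lia.
have H1B1 := inclHB C1 l1. have H2B2 := inclHB C2 l2.
have Pp : forall H B, incl Y H -> incl B Z ->
    forall U', kpencil k H B U' -> P U'.
  move=> H B YH BZ U' [S' [H' B']]; apply/HP; split => //; split.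
    by move=> v /YH /H'.
  by move=> v /B' /BZ.
case: Hd => [[SY SZ]|[SY SZ]].
  have [YH1 B1Z] := in_plane_pen k0 HH1 HB1 SZ C1 l1 I1 HP.
  have [YH2 B2Z] := in_plane_pen k0 HH2 HB2 SZ C2 l2 I2 HP.
  have ZB1 := hd_eq HB1 SZ B1Z. have ZB2 := hd_eq HB2 SZ B2Z.
  have nH21 : ~ incl H2 H1.
    move=> h21; apply: nL; apply: (eqL C1 C2 (hd_eq HH2 HH1 h21) h21).
      by move=> v /B1Z /ZB2.
    by move=> v /B2Z /ZB1.
  have [h [H2h nH1h]] := ex_diff nH21.
  have HE := hd_ext HH1 nH1h; rewrite prednK // in HE.
  have nYh : ~ Y h by move=> /YH1.
  have HE' := hd_ext SY nYh.
  have HE'' : hasdim (addv Y h) k.-1 by have -> : k.-1 = (k - 2).+1 by lia.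
  have E'H2 : incl (addv Y h) H2 := addv_min HH2 YH2 H2h.
  have H2E' := hd_eq HE'' HH2 E'H2.
  have E'E : incl (addv Y h) (addv H1 h) :=
    addv_min HE (fun v Yv => addv_l _ (YH1 _ Yv)) (addv_x h HH1).
  have EZ : incl (addv H1 h) Z :=
    addv_min SZ (fun v Hv => B1Z _ (H1B1 _ Hv)) (B2Z _ (H2B2 _ H2h)).
  exists (addv H1 h); split.
    apply/HP; split => //; split => //.
    by move=> v /YH1 /addv_l.
  split.
    split => //; split; [by move=> v /addv_l | by move=> v /EZ /ZB1].
  split.
    split => //; split; [by move=> v /H2E' /E'E | by move=> v /EZ /ZB2].
  by split; [apply: Pp | apply: Pp].
have [YH1 B1Z] := in_plane_pen k0 HH1 HB1 SZ C1 l1 I1 HP.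
have [YH2 B2Z] := in_plane_pen k0 HH2 HB2 SZ C2 l2 I2 HP.
have H1Y := hd_eq SY HH1 YH1. have H2Y := hd_eq SY HH2 YH2.
have nB21 : ~ incl B2 B1.
  move=> b21; apply: nL; apply: (eqL C1 C2 _ _ (hd_eq HB2 HB1 b21) b21).
    by move=> v /H1Y /YH2.
  by move=> v /H2Y /YH1.
have [b [B2b nB1b]] := ex_diff nB21.
have HE := hd_ext HB1 nB1b.
have EZ : incl (addv B1 b) Z := addv_min SZ B1Z (B2Z _ B2b).
have ZE := hd_eq HE SZ EZ.
have [K [HK [KB1 [KB2 BBK]]]] :=
  hd_meet HB1 nB1b HB2 (fun v Hv => ZE _ (B2Z _ Hv)) nB21.
have YK : incl Y K.
  by move=> v Yv; apply: BBK; [apply: H1B1; apply: YH1 | apply: H2B2; apply: YH2].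
exists K; split.
  apply/HP; split => //; split => // v /KB1 /B1Z //.
split.
  split => //; split => // v /H1Y /YK //.
split.
  split => //; split => // v /H2Y /YK //.
by split; [apply: Pp | apply: Pp].
Qed.

Lemma closure_of {k m W} {L : @ptset R V} {H B : @subsp R V} :
  hasdim H k.-1 -> hasdim B k.+1 -> lchar k m W L H B -> is_line k m W L ->
  closure_line k L (kpencil k H B).
Proof.
move=> HH HB C l; split; last by move=> U /C [].
exists H, B; do 3 (split => //); first exact: (inclHB C l).
Qed.

Lemma finishM {k m W} {P L1 L2 : @ptset R V} {H1 B1 H2 B2 : @subsp R V} :
  planeP k P -> is_line k m W L1 -> is_line k m W L2 ->
  lchar k m W L1 H1 B1 -> lchar k m W L2 H2 B2 -> ~ sameL L1 L2 ->
  (forall U, kpencil k H1 B1 U -> P U) -> (forall U, kpencil k H2 B2 U -> P U) ->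
  planeM k m W P /\ Defs.inE k m W P L1 /\ Defs.inE k m W P L2.
Proof.
move=> HP l1 l2 C1 C2 nS P1 P2.
have i1 : Defs.inE k m W P L1 by move=> U /C1 [kU pU]; split => //; apply: P1.
have i2 : Defs.inE k m W P L2 by move=> U /C2 [kU pU]; split => //; apply: P2.
split => //; split => //; exists L1, L2; done.
Qed.

Lemma main_sec k m W : (1 < k)%N ->
  ((forall C : @lineset R V, flat k m W C -> clique (pi_rel k m W) C) /\
   (forall C, semibundle k m W C -> clique (pi_rel k m W) C)) /\
  ((forall C, semiflat k m W C -> clique (rho_rel k m W) C) /\
   (forall C, proper_semibundle k m W C -> clique (rho_rel k m W) C)).
Proof.
move=> k1; have k0 : (0 < k)%N by lia.
have SB : forall (C : @ptset R V -> Prop) X U, semibundle_at k m W X U C ->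
    forall L1 L2, C L1 -> C L2 -> ~ sameL L1 L2 ->
    exists P H1 B1 H2 B2, planeM k m W P /\ P U /\
      hasdim H1 k.-1 /\ hasdim B1 k.+1 /\ hasdim H2 k.-1 /\ hasdim B2 k.+1 /\
      lchar k m W L1 H1 B1 /\ lchar k m W L2 H2 B2 /\
      is_line k m W L1 /\ is_line k m W L2 /\
      kpencil k H1 B1 U /\ kpencil k H2 B2 U /\
      (forall U', kpencil k H1 B1 U' -> P U') /\ (forall U', kpencil k H2 B2 U' -> P U').
  move=> C X U [Hst [_ HC]] L1 L2 /HC [l1 [[c1 [cl1 cU1]] X1]] /HC [l2 [[c2 [cl2 cU2]] X2]] nS.
  have [H1 [B1 [HH1 [HB1 [C1 _]]]]] := line_data l1.
  have [H2 [B2 [HH2 [HB2 [C2 _]]]]] := line_data l2.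
  have kU1 := proj2 (closure_eq k0 HH1 HB1 C1 l1 cl1 U) cU1.
  have kU2 := proj2 (closure_eq k0 HH2 HB2 C2 l2 cl2 U) cU2.
  have [P [HP [PU [P1 P2]]]] :=
    key_sb k1 HH1 HB1 HH2 HB2 C1 C2 l1 l2 kU1 kU2 nS Hst X1 X2.
  have [HPM _] := finishM HP l1 l2 C1 C2 nS P1 P2.
  by exists P, H1, B1, H2, B2.
split; split.
- move=> C [P [HPM HC]] L1 L2 /HC [l1 i1] /HC [l2 i2] nS.
  by exists P.
- move=> C [X [U HSB]] L1 L2 CL1 CL2 nS.
  have [P [H1 [B1 [H2 [B2 [HPM [PU [HH1 [HB1 [HH2 [HB2 [C1 [C2 [l1 [l2 [_ [_ [P1 P2]]]]]]]]]]]]]]]]]] :=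
    SB C X U HSB L1 L2 CL1 CL2 nS.
  exists P; split => //.
  split; [by move=> U' /C1 [kU pU]; split => //; apply: P1
         | by move=> U' /C2 [kU pU]; split => //; apply: P2].
- move=> C [P [HPM [A [HA [Hnp [_ HC]]]]]] L1 L2 CL1 CL2 nS.
  have CL : forall L, C L -> is_line k m W L /\ Defs.inE k m W P L.
    move=> L /HC [[[lL _] iL]|/HA [[lL _] iL]] //.
  have [l1 I1] := CL _ CL1. have [l2 I2] := CL _ CL2.
  have [H1 [B1 [HH1 [HB1 [C1 _]]]]] := line_data l1.
  have [H2 [B2 [HH2 [HB2 [C2 _]]]]] := line_data l2.
  have [U [PU [kU1 [kU2 [P1 P2]]]]] :=
    key_sf k1 HH1 HB1 HH2 HB2 C1 C2 l1 l2 (proj1 HPM) I1 I2 nS.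
  have notproj : forall L H B, lchar k m W L H B -> hasdim H k.-1 -> hasdim B k.+1 ->
      is_line k m W L -> kpencil k H B U -> ~ pointS k m W U -> C L -> A L.
    move=> L H B CC HH HB lL kU npU /HC [[[_ [l [cl lL']]] _]|//].
    exfalso; apply: npU.
    have := lL' U (proj1 (closure_eq k0 HH HB CC lL cl U) kU).
    by move=> /CC [].
  have pU : pointS k m W U.
    apply: NNPP => npU.
    have A1 := notproj _ _ _ C1 HH1 HB1 l1 kU1 npU CL1.
    have A2 := notproj _ _ _ C2 HH2 HB2 l2 kU2 npU CL2.
    apply: (Hnp L1 L2 A1 A2 nS); split; first exact: (proj1 (HA _ A1)).
    split; first exact: (proj1 (HA _ A2)).
    exists (kpencil k H1 B1), (kpencil k H2 B2), U.
    by split; [exact: closure_of HH1 HB1 C1 l1 | split; [exact: closure_of HH2 HB2 C2 l2 | ]].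
  exists P, U; do 3 (split => //).
  split.
    split => //; exists (kpencil k H1 B1); split; first exact: closure_of HH1 HB1 C1 l1.
    by split.
  split => //; exists (kpencil k H2 B2); split; first exact: closure_of HH2 HB2 C2 l2.
  by split.
- move=> C [X [U [HSB pU]]] L1 L2 CL1 CL2 nS.
  have [P [H1 [B1 [H2 [B2 [HPM [PU [HH1 [HB1 [HH2 [HB2 [C1 [C2 [l1 [l2 [kU1 [kU2 [P1 P2]]]]]]]]]]]]]]]]]] :=
    SB C X U HSB L1 L2 CL1 CL2 nS.
  exists P, U; do 3 (split => //).
  split.
    split => //; exists (kpencil k H1 B1); split; first exact: closure_of HH1 HB1 C1 l1.
    by split.
  split => //; exists (kpencil k H2 B2); split; first exact: closure_of HH2 HB2 C2 l2.
  by split.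
Qed.

End LA.

Theorem lemma2p1 (R : unitRingType) (V : lmodType R) (HR : division_ring R)
  (n k w m : nat) (W : @subsp R V)
  (HV : hasdim (fun _ : V => True) n) (Hn : (3 <= n)%N)
  (Hk1 : (1 < k)%N) (Hk2 : (k < n - 1)%N)
  (HW : hasdim W w)
  (Hm1 : (k <= m + (n - w))%N) (Hm2 : (m <= minn k w)%N) :
  ((forall C, flat k m W C -> clique (pi_rel k m W) C) /\
   (forall C, semibundle k m W C -> clique (pi_rel k m W) C)) /\
  ((forall C, semiflat k m W C -> clique (rho_rel k m W) C) /\
   (forall C, proper_semibundle k m W C -> clique (rho_rel k m W) C)).
Proof. exact: (main_sec HR k m W Hk1). Qed.
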